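(* Let $a,b\in\mathbb{Z}$ with $\gcd(a,b)=1$, and let $t$ be a positive integer. Then $$\#\{(x,y)\in \mathbb Z^2:\ ax+by\in [1,t(a^2+b^2)-1] \text{ and } ay-bx \in [1,t(a^2+b^2)-1] \}=(a^2+b^2)t^2-2t+1.$$
   Context: Here $[m,M]$ denotes the closed real interval, so the conditions say $1\le ax+by\le t(a^2+b^2)-1$ and $1\le ay-bx\le t(a^2+b^2)-1$. *)

(* Defs.v *)
From HB Require Import structures.
From mathcomp Require Import all_boot all_order all_algebra.
Set Implicit Arguments. Unset Strict Implicit. Unset Printing Implicit Defensive.
Import Order.TTheory GRing.Theory Num.Theory.
Local Open Scope ring_scope.

Definition in_box (a b t : int) (p : int * int) : Prop :=
  let x := p.1 in let y := p.2 in
  (1 <= a * x + b * y <= t * (a ^+ 2 + b ^+ 2) - 1) /\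
  (1 <= a * y - b * x <= t * (a ^+ 2 + b ^+ 2) - 1).

Definition has_card (P : int * int -> Prop) (n : nat) : Prop :=
  exists s : seq (int * int), uniq s /\ (forall p, p \in s <-> P p) /\ size s = n.

(* Main.v *)
Require Import Defs.
From HB Require Import structures.
From mathcomp Require Import all_boot all_order all_algebra.
From mathcomp Require Import zify ring lra.
Import Order.TTheory GRing.Theory Num.Theory.
Local Open Scope ring_scope.

Lemma blkn (N r c : nat) : (r < N)%N ->
  count (fun i => i %% N == r)%N (iota c N) = 1%N.
Proof.
move=> rN; elim: c => [|c IH].
  rewrite (@eq_in_count _ _ (pred1 r)); last first.
    move=> i; rewrite mem_iota add0n => /andP[_ iN] /=. by rewrite (modn_small iN).
  by rewrite count_uniq_mem ?iota_uniq // mem_iota add0n rN.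
have N0 : (0 < N)%N by case: N rN {IH}.
have E1 : iota c N = c :: iota c.+1 N.-1 by rewrite -{1}(prednK N0).
have E2 : iota c.+1 N = iota c.+1 N.-1 ++ [:: c + N].
  by rewrite -{1}(prednK N0) -[N.-1.+1]addn1 iotaD addSnnS prednK.
move: IH; rewrite E1 E2 count_cat /= modnDr addn0 => <-; rewrite addnC.
done.
Qed.

Lemma blk (N : nat) (w : int) (c : nat) : (0 < N)%N ->
  count (fun i : nat => (N%:Z %| i%:Z - w)%Z) (iota c N) = 1%N.
Proof.
move=> N0.
have wge : 0 <= (w %% N)%Z by apply: modz_ge0; rewrite eqz_nat -lt0n.
have wlt : (w %% N)%Z < N by apply: ltz_pmod; rewrite ltz_nat.
rewrite -(@blkn N `|(w %% N)%Z|%N c); last by rewrite -ltz_nat gez0_abs.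
apply: eq_count => i /=.
by rewrite -eqz_mod_dvd modz_nat -eqz_nat gez0_abs.
Qed.

Lemma cnt0 (N t : nat) (w : int) : (0 < N)%N ->
  count (fun i : nat => (N%:Z %| i%:Z - w)%Z) (iota 0 (t * N)) = t.
Proof.
move=> N0; elim: t => [|t IH]; first by rewrite mul0n.
by rewrite mulSnr iotaD count_cat IH blk // addn1.
Qed.

Lemma cntU (N t : nat) (w : int) : (0 < N)%N -> (0 < t)%N ->
  (count (fun v : int => (N%:Z %| (v - w)%R)%Z) [seq Posz i | i <- iota 1 (t * N).-1]
   + (N%:Z %| w)%Z = t)%N.
Proof.
move=> N0 t0; rewrite count_map -[in RHS](@cnt0 N t w N0).
have tN : (0 < t * N)%N by rewrite muln_gt0 t0.
rewrite -{2}(prednK tN) /= addnC; congr (_ + _)%N.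
by rewrite sub0r rpredN.
Qed.

Lemma sumn_sub (T : Type) (s : seq T) (t : nat) (b : pred T) (f : T -> nat) :
  (forall x, f x + b x = t)%N -> (sumn (map f s) + count b s = size s * t)%N.
Proof.
move=> H; elim: s => [|x s IH] //=.
by rewrite mulSn -IH -(H x); lia.
Qed.

Lemma L1 (a b p q u v : int) : p * a + q * b = 1 ->
  ((a^+2 + b^+2 %| a * u - b * v)%Z && (a^+2 + b^+2 %| b * u + a * v)%Z) =
  (a^+2 + b^+2 %| v - u * (a * q - b * p))%Z.
Proof.
move=> H; apply/idP/idP.
  case/andP => /dvdzP[m1 E1] /dvdzP[m2 E2]; apply/dvdzP; exists (p * m2 - q * m1).
  have -> : v - u * (a * q - b * p) = v * (p * a + q * b) - u * (a * q - b * p) by rewrite H mulr1.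
  have -> : (p * m2 - q * m1) * (a ^+ 2 + b ^+ 2) = p * (m2 * (a ^+ 2 + b ^+ 2)) - q * (m1 * (a ^+ 2 + b ^+ 2)) by ring.
  rewrite -E1 -E2; ring.
case/dvdzP=> m E.
have Ev : v = u * (a * q - b * p) + m * (a^+2 + b^+2) by rewrite -E; ring.
apply/andP; split; apply/dvdzP.
  exists (u * p - b * m).
  have -> : a * u - b * v = (u * p - b * m) * (a^+2 + b^+2) + u * a*(1 - (p * a+q * b)) by rewrite Ev; ring.
  by rewrite H subrr mulr0 addr0.
exists (u * q + a * m).
have -> : b * u + a * v = (u * q + a * m) * (a^+2 + b^+2) + u * b*(1 - (p * a+q * b)) by rewrite Ev; ring.
by rewrite H subrr mulr0 addr0.
Qed.

Lemma L2 (a b p q u : int) : p * a + q * b = 1 ->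
  (a^+2 + b^+2 %| u * (a * q - b * p))%Z = (a^+2 + b^+2 %| u)%Z.
Proof.
move=> H; apply/idP/idP; last by move=> /dvdzP[m ->]; apply/dvdzP; exists (m * (a * q-b * p)); ring.
case/dvdzP=> m E; apply/dvdzP; exists (u * (p^+2+q^+2) - m * (a * q-b * p)).
have -> : (u * (p ^+ 2 + q ^+ 2) - m * (a * q - b * p)) * (a ^+ 2 + b ^+ 2) =
   u * (p ^+ 2 + q ^+ 2) * (a ^+ 2 + b ^+ 2) - (m * (a ^+ 2 + b ^+ 2)) * (a * q - b * p) by ring.
rewrite -E; transitivity (u * (p * a + q * b)^+2); first by rewrite H expr1n mulr1.
ring.
Qed.

Lemma memUZ (n : nat) (z : int) :
  (z \in [seq Posz i | i <- iota 1 n.-1]) = (1 <= z <= n%:Z - 1).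
Proof.
case: z => [m|m].
  rewrite mem_map; last by move=> x y [].
  rewrite mem_iota; apply/idP/idP => /andP[h1 h2]; apply/andP; split; lia.
have -> : (1 <= Negz m) = false by [].
by apply/negbTE/mapP => -[].
Qed.

Lemma gf (a b u v : int) : a^+2 + b^+2 != 0 ->
  (a^+2 + b^+2 %| a * u - b * v)%Z -> (a^+2 + b^+2 %| b * u + a * v)%Z ->
  a * ((a * u - b * v) %/ (a^+2 + b^+2))%Z + b * ((b * u + a * v) %/ (a^+2 + b^+2))%Z = u /\
  a * ((b * u + a * v) %/ (a^+2 + b^+2))%Z - b * ((a * u - b * v) %/ (a^+2 + b^+2))%Z = v.
Proof.
move=> N0 d1 d2; move: (divzK d1) (divzK d2).
set x := ((a * u - b * v) %/ _)%Z; set y := ((b * u + a * v) %/ _)%Z => Ex Ey.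
split; apply: (mulIf N0).
  transitivity (a * (x * (a^+2 + b^+2)) + b * (y * (a^+2 + b^+2))); first ring.
  rewrite Ex Ey; ring.
transitivity (a * (y * (a^+2 + b^+2)) - b * (x * (a^+2 + b^+2))); first ring.
rewrite Ex Ey; ring.
Qed.

Lemma fg (a b x y : int) : a^+2 + b^+2 != 0 ->
  ((a * (a * x + b * y) - b * (a * y - b * x)) %/ (a^+2 + b^+2))%Z = x /\
  ((b * (a * x + b * y) + a * (a * y - b * x)) %/ (a^+2 + b^+2))%Z = y.
Proof.
move=> N0; split; rewrite -[X in _ = X](mulzK _ N0); congr (_ %/ _)%Z; ring.
Qed.

Theorem proposition2p1 (a b t : int) :
  gcdz a b = 1%N -> 0 < t ->
  exists n : nat,
    has_card (in_box a b t) n /\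
    (n%:Z = (a ^+ 2 + b ^+ 2) * t ^+ 2 - 2 * t + 1).
Proof.
move=> g1 t0.
have [p [q Hb]] := Bezoutz a b; rewrite g1 in Hb.
have N0 : a^+2 + b^+2 != 0.
  apply/negP; rewrite paddr_eq0 ?sqr_ge0 // !sqrf_eq0 => /andP[/eqP a0 /eqP b0].
  by move: g1; rewrite a0 b0 gcdz0.
have Nge : 0 <= a^+2 + b^+2 by rewrite addr_ge0 ?sqr_ge0.
set N := a^+2 + b^+2 in N0 Nge *.
set Nn := `|N|%N.
have HN : N = Nn%:Z by rewrite /Nn gez0_abs.
have Nn0 : (0 < Nn)%N by rewrite lt0n -eqz_nat -HN.
case: t t0 => [tn|//] t0.
have tn0 : (0 < tn)%N by [].
set k := a * q - b * p.
set UZ := [seq Posz i | i <- iota 1 (tn * Nn).-1].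
set S0 := [seq (u, v) | u <- UZ, v <- [seq v <- UZ | (N %| (v - u * k)%R)%Z]].
set f := fun uv : int * int => ((a * uv.1 - b * uv.2) %/ N, (b * uv.1 + a * uv.2) %/ N)%Z.
have memS0 : forall u v, (u, v) \in S0 <->
    [/\ u \in UZ, v \in UZ & (N %| (v - u * k)%R)%Z].
  move=> u v; split.
    by case/allpairsPdep => x [y [hx]]; rewrite mem_filter => /andP[hd hy] [-> ->].
  case=> hu hv hd; apply/allpairsPdep; exists u, v; split => //.
  by rewrite mem_filter hd.
have memUZ' : forall z, (z \in UZ) = (1 <= z <= Posz tn * N - 1).
  by move=> z; rewrite memUZ HN.
exists (size S0); split.
  exists (map f S0); split; [|split].
  - rewrite map_inj_in_uniq.
      apply: allpairs_uniq_dep.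
      + by rewrite map_inj_uniq ?iota_uniq // => x y [].
      + by move=> u _; rewrite filter_uniq // map_inj_uniq ?iota_uniq // => x y [].
      + by move=> [x1 y1] [x2 y2] _ _ /= [-> ->].
    move=> [u1 v1] [u2 v2] /memS0 [_ _ h1] /memS0 [_ _ h2].
    move: h1 h2; rewrite -!(@L1 a b p q _ _ Hb) => /andP[d1 d2] /andP[d3 d4].
    case: (@gf a b _ _ N0 d1 d2) => E1 E2; case: (@gf a b _ _ N0 d3 d4) => E3 E4.
    rewrite /f /= => -[X Y]; congr (_, _).
      by rewrite -E1 -E3 X Y.
    by rewrite -E2 -E4 X Y.
  - move=> [x y]; split.
      case/mapP => [[u v]] /memS0 [hu hv hd] E.
      move: hd; rewrite -(@L1 a b p q _ _ Hb) => /andP[d1 d2].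
      case: (@gf a b _ _ N0 d1 d2); rewrite /f /= in E; case: E => -> ->; rewrite /in_box /= => -> ->.
      by rewrite -/N -!memUZ'.
    rewrite /in_box /= -/N -!memUZ' => -[h1 h2].
    apply/mapP; exists (a * x + b * y, a * y - b * x).
      apply/memS0; split => //; rewrite -(@L1 a b p q _ _ Hb); apply/andP; split; apply/dvdzP.
        by exists x; rewrite /N; ring.
      by exists y; rewrite /N; ring.
    by case: (@fg a b x y N0) => E1 E2; rewrite /f /= E1 E2.
  - by rewrite size_map.
rewrite size_allpairs_dep.
have key : (sumn [seq size [seq v <- UZ | (N %| (v - u * k)%R)%Z] | u <- UZ]
     + count (fun u => (N %| u)%Z) UZ = size UZ * tn)%N.
  apply: sumn_sub => u; rewrite size_filter -(@L2 a b p q u Hb) -/N -/k HN.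
  exact: cntU.
have c0 : (count (fun u => (N %| u)%Z) UZ + 1 = tn)%N.
  have := @cntU Nn tn 0 Nn0 tn0; rewrite dvdz0 /= => <-; congr (_ + _)%N.
  by apply: eq_count => u; rewrite subr0 HN.
move: key; rewrite size_map size_iota.
set n := sumn _ => key.
rewrite HN; move: key c0; set c := count _ _ => key c0.
have E : (n + tn = tn * Nn * tn - tn + 1)%N.
  have H1 : ((tn * Nn).-1 * tn = tn * Nn * tn - tn)%N.
    by rewrite -subn1 mulnBl mul1n.
  lia.
have : (n%:Z + tn%:Z = (tn * Nn * tn - tn + 1)%N%:Z) by rewrite -PoszD E.
have le1 : (tn <= tn * Nn * tn)%N by rewrite -mulnA leq_pmulr // muln_gt0 Nn0.
rewrite PoszD -(subzn le1) !PoszM => H.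
have -> : n%:Z = tn%:Z * Nn%:Z * tn%:Z - tn%:Z + 1 - tn%:Z by rewrite -H; ring.
ring.
Qed.
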